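(* Let $P=\{x\in\mathbb{R}^n: Ax\le b,\ 0\le x_i\le u_i \text{ for } i\in I\}$ be a rational polyhedron with $I=\{1,\dots,l\}$ and positive integers $u_i$, let $P^I=\{x\in P: x_i\in\mathbb{Z}\text{ for } i\in I\}$, and let $\mathcal{B}=(B^1,\dots,B^l)$ be a binarization scheme in which each $B^i\in\Gamma^{u_i}_{u_i}$ is a unimodular binarization polytope. Then \[\operatorname{proj}_x\big(\mathrm{SC}^q(P_{\mathcal{B}},I_{\mathcal{B}})\big)=\mathrm{conv}(P^I),\qquad\text{where } q=\sum_{i=1}^l\lceil\log_2(u_i+1)\rceil.\]
   Context: For positive integers $q,u$, $\Gamma^q_u$ is the set of rational polytopes $B\subseteq\{(x,z)\in\mathbb{R}\times[0,1]^q:0\le x\le u\}$ with $\operatorname{proj}_x(B\cap(\mathbb{R}\times\{0,1\}^q))=\{0,1,\dots,u\}$. $B$ is perfect if for each $x\in\{0,\dots,u\}$ there is a unique $z\in\{0,1\}^q$ with $(x,z)\in B$, and $B=\mathrm{conv}(B\cap(\mathbb{R}\times\{0,1\}^q))$. A perfect $B\in\Gamma^u_u$, $B=\mathrm{conv}\{(j,w^j):j=0,\dots,u\}$ with $w^j\in\{0,1\}^u$, is unimodular if the matrix with columns $w^j-w^0$ ($j=1,\dots,u$) is integral with determinant $\pm1$. With $p=\sum_iu_i$, $P_{\mathcal{B}}=\{(x,z)\in\mathbb{R}^n\times\mathbb{R}^p: x\in P,\ (x_i,z_i)\in B^i\text{ for } i\in I\}$, $z=(z_1,\dots,z_l)$,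 $z_i\in\mathbb{R}^{u_i}$, and $I_{\mathcal{B}}=\{1,\dots,l,n+1,\dots,n+p\}$. Split closure: for $J\subseteq\{1,\dots,N\}$ and $X\subseteq\mathbb{R}^N$, $\mathrm{SC}(X,J)=\bigcap\mathrm{conv}(X\setminus S)$ over all $S=\{y:\pi_0<\pi^Ty<\pi_0+1\}$ with $\pi\in\mathbb{Z}^N$, $\pi_j=0$ for $j\notin J$, $\pi_0\in\mathbb{Z}$; $\mathrm{SC}^1=\mathrm{SC}$ and $\mathrm{SC}^k(X,J)=\mathrm{SC}(\mathrm{SC}^{k-1}(X,J),J)$. *)

(* Defs.v *)
From HB Require Import structures.
From mathcomp Require Import all_boot all_order all_algebra.
From mathcomp Require Import classical_sets reals.
Set Implicit Arguments. Unset Strict Implicit. Unset Printing Implicit Defensive.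
Import Order.TTheory GRing.Theory Num.Theory.
Local Open Scope classical_set_scope.
Local Open Scope ring_scope.

Section Defs.
Variable R : realType.

Definition conv (N : nat) (X : set 'rV[R]_N) : set 'rV[R]_N :=
  [set x | exists (k : nat) (pts : 'I_k -> 'rV[R]_N) (lam : 'I_k -> R),
      [/\ (forall i, X (pts i)), (forall i, 0 <= lam i),
          \sum_(i < k) lam i = 1 & x = \sum_(i < k) lam i *: pts i]].

Definition split_set (N : nat) (pi : 'rV[int]_N) (pi0 : int) : set 'rV[R]_N :=
  [set y | (pi0%:~R < \sum_(j < N) (pi 0 j)%:~R * y 0 j)
           /\ (\sum_(j < N) (pi 0 j)%:~R * y 0 j < (pi0 + 1)%:~R)].

Definition SC (N : nat) (J : set 'I_N) (X : set 'rV[R]_N) : set 'rV[R]_N :=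
  [set y | forall (pi : 'rV[int]_N) (pi0 : int),
     (forall j, ~ J j -> pi 0 j = 0) -> conv (X `\` split_set pi pi0) y].

Definition SCk (N : nat) (k : nat) (X : set 'rV[R]_N) (J : set 'I_N) :=
  iter k (SC J) X.

Definition binary_vec (q : nat) (z : 'rV[R]_q) : Prop :=
  forall k, z 0 k = 0 \/ z 0 k = 1.

Definition pt (q : nat) (x : R) (z : 'rV[R]_q) : 'rV[R]_(1 + q) :=
  row_mx (\row_(_ < 1) x) z.

Definition xcoord (q : nat) (y : 'rV[R]_(1 + q)) : R := (lsubmx y) 0 0.
Definition zpart (q : nat) (y : 'rV[R]_(1 + q)) : 'rV[R]_q := rsubmx y.

Definition rational_polytope (N : nat) (B : set 'rV[R]_N) : Prop :=
  exists (k : nat) (pts : 'I_k -> 'rV[rat]_N),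
    B = conv (range (fun i => map_mx (@ratr R) (pts i))).

Definition Gamma (q u : nat) (B : set 'rV[R]_(1 + q)) : Prop :=
  [/\ rational_polytope B,
      (forall y, B y -> 0 <= xcoord y <= u%:R /\
                        forall k, 0 <= zpart y 0 k <= 1) &
      [set xcoord y | y in B `&` [set y | binary_vec (zpart y)]]
        = [set x | exists j : nat, (j <= u)%N /\ x = j%:R]].

Definition perfect (q u : nat) (B : set 'rV[R]_(1 + q)) : Prop :=
  (forall j : nat, (j <= u)%N ->
     exists! z : 'rV[R]_q, binary_vec z /\ B (pt j%:R z)) /\
  B = conv (B `&` [set y | binary_vec (zpart y)]).

Definition unimodular (u : nat) (B : set 'rV[R]_(1 + u)) : Prop :=
  [/\ @Gamma u u B, @perfect u u B &
      exists w : 'I_u.+1 -> 'rV[int]_u,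
        [/\ (forall j k, w j 0 k = 0 \/ w j 0 k = 1),
            B = conv (range (fun j : 'I_u.+1 =>
                               pt (j : nat)%:R (map_mx intr (w j)))) &
            let M := \matrix_(k < u, j < u) (w (lift ord0 j) 0 k - w ord0 0 k) in
            \det M = 1 \/ \det M = -1]].

Definition rv_nth (N : nat) (y : 'rV[R]_N) (k : nat) : R :=
  match (insub k : option 'I_N) with Some i => y 0 i | None => 0 end.

Definition polyP (n m l : nat) (hl : (l <= n)%N) (A : 'M[rat]_(m, n))
  (b : 'cV[rat]_m) (u : 'I_l -> nat) : set 'rV[R]_n :=
  [set x | (forall r, \sum_(j < n) ratr (A r j) * x 0 j <= ratr (b r 0)) /\
           (forall i : 'I_l, 0 <= x 0 (widen_ord hl i) <= (u i)%:R)].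

Definition polyPI (n m l : nat) (hl : (l <= n)%N) (A : 'M[rat]_(m, n))
  (b : 'cV[rat]_m) (u : 'I_l -> nat) : set 'rV[R]_n :=
  [set x | polyP hl A b u x /\
           forall i : 'I_l, exists z : int, x 0 (widen_ord hl i) = z%:~R].

(* offset of block z_i inside z *)
Definition offset (l : nat) (u : 'I_l -> nat) (i : 'I_l) : nat :=
  (\sum_(j < l | (j < i)%N) u j)%N.

Definition zblock (l N : nat) (u : 'I_l -> nat) (n : nat)
  (y : 'rV[R]_N) (i : 'I_l) : 'rV[R]_(u i) :=
  \row_(k < u i) rv_nth y (n + offset u i + k).

Definition polyPB (n m l : nat) (hl : (l <= n)%N) (A : 'M[rat]_(m, n))
  (b : 'cV[rat]_m) (u : 'I_l -> nat)
  (B : forall i : 'I_l, set 'rV[R]_(1 + u i)) :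
  set 'rV[R]_(n + \sum_(i < l) u i) :=
  [set y | polyP hl A b u (lsubmx y) /\
           forall i : 'I_l,
             B i (pt ((lsubmx y) 0 (widen_ord hl i)) (zblock u n y i))].

Definition IB (n l : nat) (u : 'I_l -> nat) : set 'I_(n + \sum_(i < l) u i) :=
  [set j | (j < l)%N \/ (n <= j)%N].

End Defs.

(* Main.v *)
Require Import Defs.
From HB Require Import structures.
From mathcomp Require Import all_boot all_order all_algebra.
From mathcomp Require Import classical_sets reals boolp.
From mathcomp Require Import ring lra zify.
Set Implicit Arguments. Unset Strict Implicit. Unset Printing Implicit Defensive.
Import Order.TTheory GRing.Theory Num.Theory.
Local Open Scope classical_set_scope.
Local Open Scope ring_scope.

Section Conv.
Variable R : realType.
Variable N : nat.
Implicit Types X Y Z G : set 'rV[R]_N.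

Lemma conv_self X : X `<=` conv X.
Proof.
move=> x Xx; exists 1%N, (fun=> x), (fun=> 1); split => //.
- by rewrite big_ord1.
- by rewrite big_ord1 scale1r.
Qed.

Lemma conv_mono X Y : X `<=` Y -> conv X `<=` conv Y.
Proof.
move=> XY x [k [p [lam [H1 H2 H3 H4]]]].
by exists k, p, lam; split => // i; apply: XY.
Qed.

Definition convex2 G := forall a b (t : R), 0 <= t <= 1 -> G a -> G b ->
  G (t *: a + (1 - t) *: b).

Lemma conv_convex2 X : convex2 (conv X).
Proof.
move=> a b t /andP[t0 t1] [k1 [p1 [l1 [P1 L1 S1 ->]]]] [k2 [p2 [l2 [P2 L2 S2 ->]]]].
exists (k1 + k2)%N,
  (fun i => match split i with inl a => p1 a | inr b => p2 b end),
  (fun i => match split i with inl a => t * l1 a | inr b => (1 - t) * l2 b end).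
split.
- by move=> i; case: (split i).
- move=> i; case: (split i) => c; apply: mulr_ge0 => //; lra.
- rewrite big_split_ord /=.
  have sl (i : 'I_k1) : @split k1 k2 (lshift k2 i) = inl i := unsplitK (inl i).
  have sr (i : 'I_k2) : @split k1 k2 (rshift k1 i) = inr i := unsplitK (inr i).
  under eq_bigr do rewrite sl.
  under [X in _ + X]eq_bigr do rewrite sr.
  by rewrite -!mulr_sumr S1 S2 !mulr1; lra.
- rewrite big_split_ord /= !scaler_sumr.
  have sl (i : 'I_k1) : @split k1 k2 (lshift k2 i) = inl i := unsplitK (inl i).
  have sr (i : 'I_k2) : @split k1 k2 (rshift k1 i) = inr i := unsplitK (inr i).
  by congr (_ + _); apply: eq_bigr => i _; rewrite ?sl ?sr scalerA.
Qed.

Lemma conv_le G X : convex2 G -> X `<=` G -> conv X `<=` G.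
Proof.
move=> cG XG x [k [p [lam [Pp L S ->]]]].
elim: k p lam Pp L S => [|k IH] p lam Pp L S.
  by move: S; rewrite big_ord0 => /eqP; rewrite eq_sym oner_eq0.
rewrite big_ord_recl.
rewrite big_ord_recl in S.
have L0 := L ord0.
have Lr : 0 <= \sum_(i < k) lam (lift ord0 i) by apply: sumr_ge0 => i _.
case: (eqVneq (lam ord0) 1) => [E1|N1].
  have Z : \sum_(i < k) lam (lift ord0 i) = 0 by lra.
  have Zi := psumr_eq0P (fun i _ => L (lift ord0 i)) Z.
  rewrite E1 scale1r big1 ?addr0; first exact: XG.
  by move=> i _; rewrite Zi // scale0r.
set s := \sum_(i < k) lam (lift ord0 i).
have s0 : s != 0 by apply/eqP => s0; move/eqP: N1; apply; rewrite /s in s0; lra.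
have sp : 0 < s by rewrite lt_def s0 Lr.
have -> : \sum_(i < k) lam (lift ord0 i) *: p (lift ord0 i) =
   (1 - lam ord0) *: \sum_(i < k) (lam (lift ord0 i) / s) *: p (lift ord0 i).
  rewrite scaler_sumr; apply: eq_bigr => i _; rewrite scalerA; congr (_ *: _).
  have -> : 1 - lam ord0 = s by rewrite /s; lra.
  by rewrite mulrC -mulrA mulVf // mulr1.
apply: cG.
- apply/andP; split => //; lra.
- exact: XG.
- apply: IH.
  + by move=> i; apply: Pp.
  + by move=> i; apply: divr_ge0.
  + by rewrite -mulr_suml divff.
Qed.

Lemma conv_idem X : conv (conv X) `<=` conv X.
Proof. by apply: conv_le; [exact: conv_convex2 | ]. Qed.

Variable J : set 'I_N.

Lemma SC_mono Y Z : Y `<=` Z -> SC J Y `<=` SC J Z.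
Proof.
move=> YZ y Hy pi pi0 Hpi; apply: conv_mono (Hy pi pi0 Hpi).
by move=> x [Yx nS]; split => //; apply: YZ.
Qed.

Lemma SC_sub_conv Z : SC J Z `<=` conv Z.
Proof.
move=> y Hy; have := Hy 0 0 (fun _ _ => mxE _ _ _ _).
apply: conv_mono => x [Zx _]; exact: Zx.
Qed.

Lemma SC_convex2 Z : convex2 (SC J Z).
Proof.
move=> a b t tt Ha Hb pi pi0 Hpi; apply: conv_convex2 => //.
- exact: Ha.
- exact: Hb.
Qed.

Lemma SCk_mono k Y Z : Y `<=` Z -> SCk k Y J `<=` SCk k Z J.
Proof.
elim: k => [//|k IH] YZ /=; apply: SC_mono; exact: IH.
Qed.

Lemma SCk_le k G Z : convex2 G -> Z `<=` G -> SCk k Z J `<=` G.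
Proof.
move=> cG ZG; elim: k => [//|k IH] /=.
move=> y /SC_sub_conv; exact: conv_le.
Qed.

Lemma SCk_convex2 k Z : convex2 Z -> convex2 (SCk k Z J).
Proof. by case: k => [//|k] _ /=; apply: SC_convex2. Qed.

Definition affine (h : 'rV[R]_N -> R) := forall k (p : 'I_k -> 'rV[R]_N) (lam : 'I_k -> R),
  \sum_(i < k) lam i = 1 -> h (\sum_(i < k) lam i *: p i) = \sum_(i < k) lam i * h (p i).

Lemma aff_ge0_conv h X : affine h -> (forall p, X p -> 0 <= h p) ->
  forall p, conv X p -> 0 <= h p.
Proof.
move=> ah H p [k [q [lam [Xq L S ->]]]]; rewrite ah //.
by apply: sumr_ge0 => i _; apply: mulr_ge0 => //; apply: H.
Qed.

Lemma SC_face h Z : affine h -> (forall p, Z p -> 0 <= h p) ->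
  forall y, SC J Z y -> h y = 0 -> SC J (Z `&` [set p | h p = 0]) y.
Proof.
move=> ah H y Hy hy pi pi0 Hpi.
have [k [p [lam [Pp L S E]]]] := Hy pi pi0 Hpi.
have T : forall i, lam i * h (p i) = 0.
  have Z0 : \sum_(i < k) lam i * h (p i) = 0 by rewrite -ah // -E.
  move=> i; apply: (psumr_eq0P _ Z0) => // j _.
  by apply: mulr_ge0 => //; apply: H; case: (Pp j).
have [i0 Hi0] : exists i0, lam i0 != 0.
  case: (boolP [exists i, lam i != 0]) => [/existsP//|/existsPn A].
  move: S; rewrite big1 => [/eqP|j _]; first by rewrite eq_sym oner_eq0.
  by have := A j; rewrite negbK => /eqP.
have hi0 : h (p i0) = 0.
  by have := T i0 => /eqP; rewrite mulf_eq0 (negbTE Hi0) /= => /eqP.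
exists k, (fun i => if lam i == 0 then p i0 else p i), lam; split => //.
- move=> i; case: eqP => li; first by have [? ?] := Pp i0; do 2?split => //.
  have [? ?] := Pp i; do 2?split => //.
  by have := T i => /eqP; rewrite mulf_eq0 => /orP[/eqP li'|/eqP //].

- rewrite E; apply: eq_bigr => i _; case: eqP => // ->; by rewrite !scale0r.
Qed.

Lemma SCk_face h Z k : affine h -> (forall p, Z p -> 0 <= h p) ->
  SCk k Z J `&` [set p | h p = 0] `<=` SCk k (Z `&` [set p | h p = 0]) J.
Proof.
move=> ah H; elim: k => [//|k IH] y [/= Hy hy].
have H' : forall p, SCk k Z J p -> 0 <= h p.
  move=> p Hp; apply: (aff_ge0_conv ah H).
  exact: (@SCk_le k (conv Z) Z (@conv_convex2 Z) (@conv_self Z) p Hp).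
apply: (SC_mono IH); exact: SC_face.
Qed.

Lemma aff_coord j : affine (fun p => p 0 j).
Proof.
move=> k p lam S; rewrite summxE; apply: eq_bigr => i _; by rewrite mxE.
Qed.

Lemma aff_const c : affine (fun _ => c).
Proof. by move=> k p lam S; rewrite -mulr_suml S mul1r. Qed.

Lemma aff_add h1 h2 : affine h1 -> affine h2 -> affine (fun p => h1 p + h2 p).
Proof.
move=> a1 a2 k p lam S; rewrite a1 // a2 // -big_split /=.
by apply: eq_bigr => i _; rewrite mulrDr.
Qed.

Lemma aff_scale c h : affine h -> affine (fun p => c * h p).
Proof.
move=> a k p lam S; rewrite a // mulr_sumr; apply: eq_bigr => i _.
by rewrite mulrCA.
Qed.

Lemma aff_opp h : affine h -> affine (fun p => - h p).
Proof.
move=> a k p lam S; rewrite a // -sumrN; apply: eq_bigr => i _.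
by rewrite mulrN.
Qed.

Lemma aff_sum (I : finType) (h : I -> 'rV[R]_N -> R) :
  (forall i, affine (h i)) -> affine (fun p => \sum_i h i p).
Proof.
move=> a k p lam S.
under eq_bigr do rewrite a //.
rewrite exchange_big /=; apply: eq_bigr => i _; by rewrite mulr_sumr.
Qed.

Lemma aff_rv_nth t : affine (fun p => rv_nth p t).
Proof.
rewrite /rv_nth; case: insub => [o|]; [exact: aff_coord | exact: aff_const].
Qed.

Lemma aff_conv_eq h X c : affine h -> (forall p, X p -> h p = c) ->
  forall p, conv X p -> h p = c.
Proof.
move=> ah H p [k [q [lam [Xq L S ->]]]]; rewrite ah //.
by under eq_bigr do rewrite H //; rewrite -mulr_suml S mul1r.
Qed.

End Conv.

Set Implicit Arguments.


Section Block.
Variable R : realType.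

Lemma aff_ext N (h1 h2 : 'rV[R]_N -> R) : (forall p, h1 p = h2 p) -> affine h1 -> affine h2.
Proof. move=> E a k p lam S; rewrite -E a //; apply: eq_bigr => i _; by rewrite E. Qed.

Definition lamB u (w0 : 'rV[int]_u) (Nm : 'M[int]_u) (p : 'rV[R]_(1 + u)) (j : 'I_u) : R :=
  \sum_(k < u) ((rsubmx p) 0 k - (w0 0 k)%:~R) * (Nm k j)%:~R.

Lemma aff_lamB u w0 Nm j : affine (fun p => @lamB u w0 Nm p j).
Proof.
apply: aff_sum => k.
apply: (@aff_ext _ (fun p => (Nm k j)%:~R * (p 0 (rshift 1 k) + - (w0 0 k)%:~R))).
  by move=> p; rewrite mxE mulrC.
apply: aff_scale; apply: aff_add; [exact: aff_coord | exact: aff_const].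
Qed.

Lemma aff_xcoord u : affine (fun p : 'rV[R]_(1 + u) => xcoord p).
Proof.
apply: (@aff_ext _ (fun p => p 0 (lshift u 0))); first by move=> p; rewrite /xcoord mxE.
exact: aff_coord.
Qed.

Lemma block_exists u (B : set 'rV[R]_(1 + u)) : unimodular B ->
  exists (w0 : 'rV[int]_u) (Nm : 'M[int]_u), forall p, B p ->
    [/\ forall j, 0 <= lamB w0 Nm p j, \sum_(j < u) lamB w0 Nm p j <= 1 &
        xcoord p = \sum_(j < u) (j.+1)%:R * lamB w0 Nm p j].
Proof.
move=> [_ _ [w [_ EB Hdet]]].
set M := \matrix_(k < u, j < u) (w (lift ord0 j) 0 k - w ord0 0 k) in Hdet.
set Mt := M^T.
set Nm := \det M *: \adj Mt.
have MN : Mt *m Nm = 1%:M.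
  rewrite /Nm -scalemxAr mul_mx_adj det_tr scale_scalar_mx.
  by case: Hdet => ->; rewrite ?mulNr ?mulrN ?opprK mul1r.
have rowMt j1 : row j1 Mt = w (lift ord0 j1) - w ord0.
  by apply/rowP => k; rewrite !mxE.
have Ev j1 j : ((w (lift ord0 j1) - w ord0) *m Nm) 0 j = (j1 == j)%:R.
  by rewrite -rowMt -row_mul MN !mxE.
have lamv (j : 'I_u.+1) j' : lamB (w ord0) Nm (pt (j : nat)%:R (map_mx intr (w j))) j' =
    ((((w j - w ord0) *m Nm) 0 j')%:~R).
  rewrite /lamB /pt row_mxKr mxE rmorph_sum; apply: eq_bigr => k _.
  by rewrite !mxE rmorphM rmorphB.
have lamv0 j' : lamB (w ord0) Nm (pt (@nat_of_ord u.+1 ord0)%:R (map_mx intr (w ord0))) j' = 0.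
  by rewrite lamv subrr mul0mx mxE.
have lamvS j1 j' : lamB (w ord0) Nm (pt (lift ord0 j1 : nat)%:R (map_mx intr (w (lift ord0 j1)))) j' = (j1 == j')%:R.
  by rewrite lamv Ev; case: eqP.
have xv (j : 'I_u.+1) : xcoord (pt (j : nat)%:R (map_mx intr (w j))) = (j : nat)%:R.
  by rewrite /xcoord /pt row_mxKl mxE.
exists (w ord0), Nm => p Bp; rewrite EB in Bp.
have vcase : forall P : 'I_u.+1 -> Prop, P ord0 -> (forall j1, P (lift ord0 j1)) -> forall j, P j.
  move=> P P0 PS j; case: (unliftP ord0 j) => [j1 ->|->] //.
split.
- move=> j; apply: (aff_ge0_conv (aff_lamB _ _ _) _ Bp) => _ [v _ <-].
  elim/vcase: v; first by rewrite lamv0.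
  by move=> j1; rewrite lamvS ler0n.
- rewrite -subr_ge0.
  apply: (aff_ge0_conv (h := fun p => 1 - \sum_(j < u) lamB (w ord0) Nm p j) _ _ Bp).
    apply: aff_add; first exact: aff_const.
    by apply: aff_opp; apply: aff_sum => j; apply: aff_lamB.
  move=> _ [v _ <-]; elim/vcase: v.
    by rewrite big1 ?subr0 // => j _; rewrite lamv0.
  move=> j1; rewrite (bigD1 j1) //= lamvS eqxx big1 ?addr0 ?subrr //.
  by move=> j /negPf jn; rewrite lamvS eq_sym jn.
- apply/eqP; rewrite -subr_eq0; apply/eqP.
  apply: (aff_conv_eq (h := fun p => xcoord p - \sum_(j < u) (j.+1)%:R * lamB (w ord0) Nm p j) _ _ Bp).
    apply: aff_add; first exact: aff_xcoord.
    apply: aff_opp; apply: aff_sum => j; apply: aff_scale; apply: aff_lamB.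
  move=> _ [v _ <-]; elim/vcase: v.
    by rewrite xv big1 ?subr0 // => j _; rewrite lamv0 mulr0.
  move=> j1; rewrite xv (bigD1 j1) //= lamvS eqxx mulr1 big1 ?addr0 ?subrr //.
  by move=> j /negPf jn; rewrite lamvS eq_sym jn mulr0.
Qed.

End Block.

Set Implicit Arguments.


Section Gen.
Variable R : realType.

Lemma rv_nthE N (y : 'rV[R]_N) (t : 'I_N) : rv_nth y t = y 0 t.
Proof. by rewrite /rv_nth valK. Qed.

Lemma reindex_row N (y : 'rV[R]_N) a uu (c : nat -> int) : (a + uu <= N)%N ->
  \sum_(t < N) ((\row_(t0 < N) (if (a <= t0 < a + uu)%N then c (t0 - a)%N else 0)) 0 t)%:~R * y 0 t
  = \sum_(k < uu) (c k)%:~R * rv_nth y (a + k).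
Proof.
move=> H.
pose F t := ((if (a <= t < a + uu)%N then c (t - a)%N else 0)%:~R : R) * rv_nth y t.
transitivity (\sum_(0 <= t < N) F t).
  by rewrite big_mkord; apply: eq_bigr => t _; rewrite mxE /F rv_nthE.
rewrite (@big_cat_nat _ _ _ a 0 N) ?(leq_trans (leq_addr uu a)) //=.
rewrite (@big_cat_nat _ _ _ (a + uu) a N) ?leq_addr //=.
rewrite [X in X + _]big1_seq ?add0r; last first.
  move=> t /andP[_]; rewrite mem_index_iota => Ht.
  rewrite /F; case: ifP => [Hc|_]; last by rewrite mul0r.
  by exfalso; move: Ht Hc; lia.
rewrite [X in _ + X]big1_seq ?addr0; last first.
  move=> t /andP[_]; rewrite mem_index_iota => Ht.
  rewrite /F; case: ifP => [Hc|_]; last by rewrite mul0r.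
  by exfalso; move: Ht Hc; lia.
rewrite -{1}(add0n a) big_addn addKn big_mkord; apply: eq_bigr => k _.
rewrite /F ifT ?addnK 1?addnC //.
by rewrite leq_addr /= ltn_add2l.
Qed.

Lemma offset_leP l (u : 'I_l -> nat) (i : 'I_l) (P : pred 'I_l) :
  (forall j : 'I_l, (j <= i)%N -> P j) ->
  (offset u i + u i <= \sum_(j < l | P j) u j)%N.
Proof.
move=> HP.
have -> : (offset u i + u i = \sum_(j < l | (j <= i)%N) u j)%N.
  rewrite (bigD1 i) //= addnC /offset; congr (_ + _)%N.
  by apply: eq_bigl => j; rewrite ltn_neqAle andbC.
rewrite big_mkcond [X in (_ <= X)%N]big_mkcond /=; apply: leq_sum => j _.
by case: ifP => // /HP ->.
Qed.

Lemma offset_tot l (u : 'I_l -> nat) (i : 'I_l) :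
  (offset u i + u i <= \sum_(j < l) u j)%N.
Proof. by apply: (@offset_leP _ _ i xpredT). Qed.

Lemma offset_lt l (u : 'I_l -> nat) (i i' : 'I_l) : (i < i')%N ->
  (offset u i + u i <= offset u i')%N.
Proof. move=> ii'; apply: offset_leP => j ji; exact: leq_ltn_trans ji ii'. Qed.

Lemma aff_sumP N (I : finType) (P : pred I) (h : I -> 'rV[R]_N -> R) :
  (forall i, affine (h i)) -> affine (fun p => \sum_(i | P i) h i p).
Proof.
move=> a k p lam S.
under eq_bigr do rewrite a //.
rewrite exchange_big /=; apply: eq_bigr => i _; by rewrite mulr_sumr.
Qed.

End Gen.


Unset Implicit Arguments.
Section Main.
Variables (R : realType) (n m l : nat) (hl : (l <= n)%N).
Variables (A : 'M[rat]_(m, n)) (b : 'cV[rat]_m) (u : 'I_l -> nat).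
Variable (B : forall i : 'I_l, set 'rV[R]_(1 + u i)).
Hypothesis hB : forall i, unimodular (B i).

Local Notation NN := (n + \sum_(i < l) u i)%N.
Local Notation XB := (@polyPB R n m l hl A b u B).
Local Notation J := (@IB n l u).

Definition W0 i : 'rV[int]_(u i) := projT1 (cid (block_exists (hB i))).
Definition NM i : 'M[int]_(u i) := projT1 (cid (projT2 (cid (block_exists (hB i))))).
Lemma NMspec i : forall p, B i p ->
    [/\ forall j, 0 <= lamB (W0 i) (NM i) p j, \sum_(j < u i) lamB (W0 i) (NM i) p j <= 1 &
        xcoord p = \sum_(j < u i) (j.+1)%:R * lamB (W0 i) (NM i) p j].
Proof. exact: (projT2 (cid (projT2 (cid (block_exists (hB i)))))). Qed.

Definition xi (y : 'rV[R]_NN) i := (lsubmx y) 0 (widen_ord hl i).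

Definition Lam i (y : 'rV[R]_NN) (j : 'I_(u i)) :=
  lamB (W0 i) (NM i) (pt (xi y i) (zblock u n y i)) j.

Lemma LamE i y j : Lam i y j =
  \sum_(k < u i) (rv_nth y (n + offset u i + k) - (W0 i 0 k)%:~R) * (NM i k j)%:~R.
Proof.
rewrite /Lam /lamB /pt row_mxKr; apply: eq_bigr => k _; by rewrite mxE.
Qed.

Lemma aff_Lam i j : affine (fun y => Lam i y j).
Proof.
apply: (@aff_ext _ _ (fun y => \sum_(k < u i)
   (NM i k j)%:~R * (rv_nth y (n + offset u i + k) + - (W0 i 0 k)%:~R))).
  by move=> y; rewrite LamE; apply: eq_bigr => k _; rewrite mulrC.
apply: aff_sum => k; apply: aff_scale; apply: aff_add;
  [exact: aff_rv_nth | exact: aff_const].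
Qed.

Lemma Lam_props i y : XB y ->
  [/\ forall j, 0 <= Lam i y j, \sum_(j < u i) Lam i y j <= 1 &
      xi y i = \sum_(j < u i) (j.+1)%:R * Lam i y j].
Proof.
move=> [_ HB]; have [H1 H2 H3] := NMspec i _ (HB i); split => //.
by rewrite -H3 /xcoord /pt row_mxKl mxE.
Qed.

Definition Xab (a bb : 'I_l -> nat) : set 'rV[R]_NN :=
  [set y | XB y /\ forall i,
     (forall j : 'I_(u i), ((j.+1 < a i)%N \/ (bb i < j.+1)%N) -> Lam i y j = 0) /\
     ((0 < a i)%N -> \sum_(j < u i) Lam i y j = 1)].

Definition G : set 'rV[R]_NN := [set y | conv (polyPI hl A b u) (lsubmx y)].

Lemma G_convex : convex2 G.
Proof.
move=> y1 y2 t tt H1 H2; rewrite /G /=.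
have -> : lsubmx (t *: y1 + (1 - t) *: y2) = t *: lsubmx y1 + (1 - t) *: lsubmx y2.
  by apply/rowP => j; rewrite !mxE.
exact: conv_convex2.
Qed.

Lemma base (a bb : 'I_l -> nat) : (forall i, a i = bb i) -> Xab a bb `<=` G.
Proof.
move=> E y [Hy HX]; apply: conv_self; split; first by case: Hy.
move=> i; exists (a i)%:Z.
have [L0 _ Lx] := Lam_props i y Hy.
have [Hz H1] := HX i.
rewrite [LHS]Lx.
have -> : \sum_(j < u i) (j.+1)%:R * Lam i y j = \sum_(j < u i) (a i)%:R * Lam i y j.
  apply: eq_bigr => j _.
  case: (eqVneq (j.+1) (a i)) => [-> //|ne].
  rewrite Hz ?mulr0 //; rewrite -E; lia.
rewrite -mulr_sumr; case: (posnP (a i)) => [->|ap]; first by rewrite mul0r.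
by rewrite H1 // mulr1.
Qed.

Lemma Xab_sub a bb : Xab a bb `<=` XB.
Proof. by move=> y []. Qed.

Definition upd (g : 'I_l -> nat) (i0 : 'I_l) (v : nat) := fun j => if j == i0 then v else g j.

Definition fs i0 m0 bb0 (y : 'rV[R]_NN) :=
  \sum_(j : 'I_(u i0) | (m0 <= j < bb0)%N) Lam i0 y j.

Lemma aff_fs i0 m0 bb0 : affine (fs i0 m0 bb0).
Proof. apply: aff_sumP => j; exact: aff_Lam. Qed.

Lemma fs_bounds i0 m0 bb0 y : XB y -> 0 <= fs i0 m0 bb0 y /\ 0 <= 1 - fs i0 m0 bb0 y.
Proof.
move=> Hy; have [L0 L1 _] := Lam_props i0 y Hy; split.
  by apply: sumr_ge0 => j _.
rewrite subr_ge0; apply: le_trans L1.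
rewrite [X in _ <= X](bigID (fun j : 'I_(u i0) => (m0 <= j < bb0)%N)) /= lerDl.
by apply: sumr_ge0 => j _.
Qed.

Lemma split_id i0 m0 bb0 : exists (pi : 'rV[int]_NN) (pi0 : int),
  (forall j, ~ J j -> pi 0 j = 0) /\
  forall y : 'rV[R]_NN, \sum_(t < NN) (pi 0 t)%:~R * y 0 t = fs i0 m0 bb0 y + pi0%:~R.
Proof.
pose c t := match (insub t : option 'I_(u i0)) with
  Some k => \sum_(j : 'I_(u i0) | (m0 <= j < bb0)%N) NM i0 k j | None => 0 end.
have ck : forall k : 'I_(u i0), c k = \sum_(j : 'I_(u i0) | (m0 <= j < bb0)%N) NM i0 k j.
  by move=> k; rewrite /c valK.
pose a0 := (n + offset u i0)%N.
exists (\row_(t < NN) (if (a0 <= t < a0 + u i0)%N then c (t - a0)%N else 0)).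
exists (\sum_(k < u i0) W0 i0 0 k * c k).
split.
  move=> j nJ; rewrite mxE; case: ifP => // /andP[h _]; exfalso; apply: nJ.
  by rewrite /IB /=; right; exact: leq_trans (leq_addr _ _) h.
move=> y; rewrite reindex_row; last first.
  by have := offset_tot u i0; rewrite /a0; lia.
rewrite /fs; under [X in _ = X + _]eq_bigr do rewrite LamE.
rewrite exchange_big /= rmorph_sum -big_split /=; apply: eq_bigr => k _.
rewrite ck -mulr_sumr rmorphM /= rmorph_sum /a0 /=.
set z := rv_nth y _; set s := \sum_(_ | _) _; ring.
Qed.

Lemma sub1 a bb i0 m0 :
  Xab a bb `&` [set p | fs i0 m0 (bb i0) p = 0] `<=` Xab a (upd bb i0 m0).
Proof.
move=> y [[Hy HX] /= fy]; split => // i.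
have [L0 _ _] := Lam_props i y Hy.
case: (eqVneq i i0) => [Ei|ne]; last first.
  by rewrite /upd (negbTE ne); apply: HX.
subst i; have [Hz H1] := HX i0; split => // j; rewrite /upd eqxx => Hj.
case: (ltnP (bb i0) j.+1) => [lt|le]; first by apply: Hz; right.
case: Hj => [lt|lt]; first by apply: Hz; left.
apply: (@psumr_eq0P R _ (fun j : 'I_(u i0) => (m0 <= j < bb i0)%N) (Lam i0 y) (fun j _ => L0 j) fy j).
by apply/andP; split; lia.
Qed.

Lemma sub2 a bb i0 m0 :
  Xab a bb `&` [set p | 1 - fs i0 m0 (bb i0) p = 0] `<=` Xab (upd a i0 m0.+1) bb.
Proof.
move=> y [[Hy HX] /= fy]; split => // i.
have [L0 L1 _] := Lam_props i y Hy.
case: (eqVneq i i0) => [Ei|ne]; last first.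
  by rewrite /upd (negbTE ne); apply: HX.
subst i; have [Hz H1] := HX i0.
have f1 : fs i0 m0 (bb i0) y = 1 by lra.
have Spl : \sum_(j < u i0) Lam i0 y j = fs i0 m0 (bb i0) y +
    \sum_(j < u i0 | ~~ (m0 <= j < bb i0)%N) Lam i0 y j.
  by rewrite (bigID (fun j : 'I_(u i0) => (m0 <= j < bb i0)%N)).
rewrite f1 in Spl.
have Rge : 0 <= \sum_(j < u i0 | ~~ (m0 <= j < bb i0)%N) Lam i0 y j by apply: sumr_ge0.
have Rz : \sum_(j < u i0 | ~~ (m0 <= j < bb i0)%N) Lam i0 y j = 0 by lra.
have Sum1 : \sum_(j < u i0) Lam i0 y j = 1 by lra.
split; rewrite /upd eqxx; last by [].
move=> j Hj.
case: (ltnP (bb i0) j.+1) => [lt|le]; first by apply: Hz; right.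
case: Hj => [lt|lt]; last by exfalso; lia.
apply: (@psumr_eq0P R _ (fun j : 'I_(u i0) => ~~ (m0 <= j < bb i0)%N) (Lam i0 y) (fun j _ => L0 j) Rz j).
by rewrite negb_and -ltnNge; apply/orP; left.
Qed.

Lemma all_eq_base k a bb : (forall i, a i = bb i) -> SCk k (Xab a bb) J `<=` G.
Proof. move=> E; apply: SCk_le; [exact: G_convex | exact: base]. Qed.

Lemma sum_upd (e : 'I_l -> nat) i0 v :
  (\sum_i upd e i0 v i + e i0 = \sum_i e i + v)%N.
Proof.
rewrite (bigD1 i0) //= [X in _ = (X + _)%N](bigD1 i0) //= /upd eqxx.
have -> : (\sum_(i < l | i != i0) (if i == i0 then v else e i) = \sum_(i < l | i != i0) e i)%N.
  by apply: eq_bigr => i /negbTE ->.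
by rewrite addnAC [RHS]addnAC [(v + _)%N]addnC.
Qed.

Lemma main_ind k : forall a bb e : 'I_l -> nat, (forall i, a i <= bb i)%N ->
  (forall i, bb i - a i < 2 ^ e i)%N -> (\sum_i e i <= k)%N -> SCk k (Xab a bb) J `<=` G.
Proof.
elim: k => [|k IH] a bb e Hab Hlt He.
  apply: all_eq_base => i.
  have : (e i <= 0)%N by apply: leq_trans He; rewrite (bigD1 i) //= leq_addr.
  rewrite leqn0 => /eqP e0; have := Hlt i; have := Hab i; rewrite e0 expn0; lia.
case: (boolP [exists i, a i < bb i]%N) => [/existsP [i0 lt0]|/existsPn Hall]; last first.
  apply: all_eq_base => i; have := Hall i; have := Hab i; lia.
have [e1 Ee] : exists e1, e i0 = e1.+1.
  case E0 : (e i0) => [|e1]; last by exists e1.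
  by have := Hlt i0; rewrite E0 expn0; lia.
pose m0 := ((a i0 + bb i0) %/ 2)%N.
pose e' := upd e i0 e1.
have He' : (\sum_i e' i <= k)%N by have := sum_upd e i0 e1; rewrite /e' Ee; lia.
have He1 : (2 ^ e i0 = 2 * 2 ^ e1)%N by rewrite Ee expnS.
have Hlt0 := Hlt i0.
have IH1 := IH a (upd bb i0 m0) e'.
have IH2 := IH (upd a i0 m0.+1) bb e'.
have {IH1}IH1 : SCk k (Xab a (upd bb i0 m0)) J `<=` G.
  apply: IH1 => // i; rewrite /upd /e' /upd; case: eqP => [->|_]; rewrite /m0; try lia.
    by apply: Hab.
  by apply: Hlt.
have {IH2}IH2 : SCk k (Xab (upd a i0 m0.+1) bb) J `<=` G.
  apply: IH2 => // i; rewrite /upd /e' /upd; case: eqP => [->|_]; rewrite /m0; try lia.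
    by apply: Hab.
  by apply: Hlt.
move=> y Hy.
have [pi [pi0 [supp Eid]]] := split_id i0 m0 (bb i0).
have := Hy pi pi0 supp; apply: conv_le; first exact: G_convex.
move=> y' [Zy' nS].
have y'c : conv (Xab a bb) y'.
  exact: (@SCk_le _ _ J k (conv (Xab a bb)) (Xab a bb) (@conv_convex2 _ _ _) (@conv_self _ _ _) y' Zy').
have h1 : affine (fun p => 1 - fs i0 m0 (bb i0) p).
  apply: aff_add; [exact: aff_const | apply: aff_opp; exact: aff_fs].
have nn0 : forall p, Xab a bb p -> 0 <= fs i0 m0 (bb i0) p.
  by move=> p /Xab_sub /(fs_bounds i0 m0 (bb i0)) [].
have nn1 : forall p, Xab a bb p -> 0 <= 1 - fs i0 m0 (bb i0) p.
  by move=> p /Xab_sub /(fs_bounds i0 m0 (bb i0)) [].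
have f0 := aff_ge0_conv (aff_fs i0 m0 (bb i0)) nn0 y'c.
have f1 := aff_ge0_conv h1 nn1 y'c.
have : fs i0 m0 (bb i0) y' = 0 \/ fs i0 m0 (bb i0) y' = 1.
  case: (eqVneq (fs i0 m0 (bb i0) y') 0) => [|n0]; first by left.
  case: (eqVneq (fs i0 m0 (bb i0) y') 1) => [|n1]; first by right.
  exfalso; apply: nS; rewrite /split_set /= Eid intrD.
  have : 0 < fs i0 m0 (bb i0) y' by rewrite lt_def n0 f0.
  have : fs i0 m0 (bb i0) y' < 1 by rewrite lt_def eq_sym n1 /=; lra.
  move=> ? ?; split; lra.
case=> fy.
  apply: IH1; apply: (@SCk_mono _ _ J k _ _ (sub1 a bb i0 m0)).
  apply: (@SCk_face _ _ J _ _ k (aff_fs i0 m0 (bb i0)) nn0); split => //.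
apply: IH2; apply: (@SCk_mono _ _ J k _ _ (sub2 a bb i0 m0)).
apply: (@SCk_face _ _ J _ _ k h1 nn1); split => //=; lra.
Qed.

Lemma dir_sub (q : nat) : (\sum_(i < l) up_log 2 (u i).+1 <= q)%N ->
  [set lsubmx y | y in SCk q XB J] `<=` conv (polyPI hl A b u).
Proof.
move=> Hq _ [y Hy <-].
have Hm := main_ind q (fun=> 0%N) u (fun i => up_log 2 (u i).+1).
have : G y; last by [].
apply: Hm => //.
- by move=> i; have := up_logP (u i).+1 (isT : (1 < 2)%N); rewrite subn0.
- apply: (SCk_mono _ Hy) => z Hz; split => // i; split => // j.
  by case=> //; have := ltn_ord j; lia.
Qed.

Lemma notin_split (y : 'rV[R]_NN) :
  (forall t, J t -> y 0 t \is a Num.int) ->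
  forall (pi : 'rV[int]_NN) pi0, (forall j, ~ J j -> pi 0 j = 0) -> ~ split_set pi pi0 y.
Proof.
move=> Hy pi pi0 Hpi [H1 H2].
have : \sum_(j < NN) (pi 0 j)%:~R * y 0 j \is a Num.int.
  apply: rpred_sum => t _.
  case: (pselect (J t)) => Jt.
    by apply: rpredM; [exact: intr_int | exact: Hy].
  by rewrite Hpi // mul0r rpred0.
move=> /intrP [z Ez]; rewrite Ez ltr_int in H1; rewrite Ez ltr_int in H2; lia.
Qed.

Lemma int_in_SCk (y : 'rV[R]_NN) k :
  (forall t, J t -> y 0 t \is a Num.int) -> XB y -> SCk k XB J y.
Proof.
move=> Hi Hy; elim: k => [//|k IH] /= pi pi0 Hpi.
apply: conv_self; split => //; exact: notin_split.
Qed.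

Lemma rv_nth_lin (y1 y2 : 'rV[R]_NN) t s k :
  rv_nth (t *: y1 + s *: y2) k = t * rv_nth y1 k + s * rv_nth y2 k.
Proof. by rewrite /rv_nth; case: insub => [o|]; rewrite ?mxE // !mulr0 addr0. Qed.

Lemma B_convex2 i : convex2 (B i).
Proof. by case: (hB i) => _ _ [w [_ -> _]]; apply: conv_convex2. Qed.

Lemma XB_convex2 : convex2 XB.
Proof.
move=> y1 y2 t /andP[t0 t1] [[P1 Q1] H1] [[P2 Q2] H2].
have Ls : lsubmx (t *: y1 + (1 - t) *: y2) = t *: lsubmx y1 + (1 - t) *: lsubmx y2.
  by apply/rowP => j; rewrite !mxE.
split; first split.
- move=> r; rewrite Ls.
  have -> : \sum_(j < n) ratr (A r j) * (t *: lsubmx y1 + (1 - t) *: lsubmx y2) 0 j =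
     t * \sum_(j < n) ratr (A r j) * lsubmx y1 0 j + (1 - t) * \sum_(j < n) ratr (A r j) * lsubmx y2 0 j.
    rewrite !mulr_sumr -big_split; apply: eq_bigr => j _; rewrite !mxE.
    rewrite /=; ring.
  have := P1 r; have := P2 r; move=> a1 a2.
  have := ler_wpM2l t0 a2; have : 0 <= 1 - t by lra.
  move=> t0' h1; have := ler_wpM2l t0' a1; lra.
- move=> i; rewrite Ls !mxE.
  have := Q1 i; have := Q2 i; move=> /andP[a1 b1] /andP[a2 b2].
  rewrite ?mxE in a1 b1 a2 b2.
  have := mulr_ge0 t0 a2; have : 0 <= 1 - t by lra.
  move=> t0' h1; have := mulr_ge0 t0' a1.
  have := ler_wpM2l t0 b2; have := ler_wpM2l t0' b1.
  move=> *; apply/andP; split; lra.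
- move=> i; have := B_convex2 i _ _ t (introT andP (conj t0 t1)) (H1 i) (H2 i).
  congr (B i _).
  rewrite /pt scale_row_mx scale_row_mx add_row_mx; congr row_mx.
    by apply/rowP => j; rewrite !mxE.
  by apply/rowP => j; rewrite !mxE rv_nth_lin.
Qed.

Lemma lift_pt x : polyPI hl A b u x ->
  exists y : 'rV[R]_NN, [/\ lsubmx y = x, XB y & forall t, J t -> y 0 t \is a Num.int].
Proof.
move=> [Px Ix].
have hj : forall i, exists j : nat, (j <= u i)%N /\ x 0 (widen_ord hl i) = j%:R.
  move=> i; have [z Ez] := Ix i; have [_ Q] := Px; have /andP[q0 q1] := Q i.
  case: z Ez => j Ez; last first.
    by exfalso; move: q0; rewrite Ez ler0z.
  exists j; split => //.
  by rewrite Ez in q1; rewrite -(ler_nat R); exact: q1.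
pose jn i := projT1 (cid (hj i)).
have jnP i : (jn i <= u i)%N /\ x 0 (widen_ord hl i) = (jn i)%:R := projT2 (cid (hj i)).
have hw : forall i, exists w : 'I_(u i).+1 -> 'rV[int]_(u i),
    B i = conv (range (fun j : 'I_(u i).+1 => pt (j : nat)%:R (map_mx intr (w j)))).
  by move=> i; case: (hB i) => _ _ [w [_ E _]]; exists w.
pose W i := projT1 (cid (hw i)).
have WP i : B i = conv (range (fun j : 'I_(u i).+1 => pt (j : nat)%:R (map_mx intr (W i j)))).
  exact: projT2 (cid (hw i)).
pose jj i : 'I_(u i).+1 := inord (jn i).
pose zint (t : nat) : int := \sum_(i < l) \sum_(k < u i)
   (if t == (offset u i + k)%N then W i (jj i) 0 k else 0).
pose zz : 'rV[R]_(\sum_(i < l) u i) := \row_(t < \sum_(i < l) u i) (zint t)%:~R.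
have zintE : forall i (k : 'I_(u i)), zint (offset u i + k)%N = W i (jj i) 0 k.
  move=> i k; rewrite /zint (bigD1 i) //= [X in _ + X]big1 ?addr0; last first.
  move=> i' ni; apply: big1 => k' _; rewrite ifF //; apply/negbTE/eqP => E.
  case: (ltngtP i i') => [lt|lt|eq].
  - by have := offset_lt u lt; have := ltn_ord k; lia.
  - by have := offset_lt u lt; have := ltn_ord k'; lia.
  - by move/eqP: ni; apply; apply: val_inj.
  rewrite (bigD1 k) //= eqxx [X in _ + X]big1 ?addr0 // => k' nk.
  by rewrite ifF // eqn_add2l eq_sym; apply/negbTE.
set y := row_mx x zz.
have rvE : forall t, (t < \sum_(i < l) u i)%N -> rv_nth y (n + t) = (zint t)%:~R.
  move=> t ht; have h : (n + t < NN)%N by rewrite ltn_add2l.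
  rewrite /rv_nth insubT /=.
  have -> : (Sub (n + t) h : 'I_NN) = rshift n (Ordinal ht) by apply: val_inj.
  by rewrite row_mxEr mxE.
exists y; split.
- by rewrite /y row_mxKl.
- split; first by rewrite /y row_mxKl.
  move=> i; rewrite WP; apply: conv_self; exists (jj i) => //.
  congr pt.
    rewrite /y row_mxKl (proj2 (jnP i)) /jj inordK //; exact: (proj1 (jnP i)).
  apply/rowP => k; rewrite !mxE -addnA rvE ?zintE //.
  by have := offset_tot u i; have := ltn_ord k; lia.
- move=> t Jt; case: (splitP t) => [j Ej|k Ek].
    have -> : t = lshift _ j by apply: val_inj.
    rewrite /y row_mxEl.
    case: Jt => [tl|tn]; last by exfalso; have := ltn_ord j; lia.
    have jl : (j < l)%N by rewrite -Ej.
    have -> : j = widen_ord hl (Ordinal jl) by apply: val_inj.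
    by rewrite (proj2 (jnP _)) rpred_nat.
  have -> : t = rshift _ k by apply: val_inj.
  by rewrite /y row_mxEr mxE intr_int.
Qed.

Lemma sup_dir q : conv (polyPI hl A b u) `<=` [set lsubmx y | y in SCk q XB J].
Proof.
move=> x [k [p [lam [Pp L S ->]]]].
have hl' i := lift_pt (p i) (Pp i).
pose Y i := projT1 (cid (hl' i)).
have YP i : [/\ lsubmx (Y i) = p i, XB (Y i) & forall t, J t -> Y i 0 t \is a Num.int].
  exact: projT2 (cid (hl' i)).
exists (\sum_(i < k) lam i *: Y i).
  apply: (@conv_le _ _ (SCk q XB J) (SCk q XB J) (@SCk_convex2 _ _ J q XB XB_convex2) (fun z Hz => Hz)).
  exists k, Y, lam; split => // i; have [_ H1 H2] := YP i; exact: int_in_SCk.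
apply/rowP => j; rewrite !mxE !summxE; apply: eq_bigr => i _.
by have [E _ _] := YP i; rewrite -E !mxE.
Qed.

End Main.

Theorem corollary3 (R : realType) (n m l : nat) (hl : (l <= n)%N)
  (A : 'M[rat]_(m, n)) (b : 'cV[rat]_m) (u : 'I_l -> nat)
  (B : forall i : 'I_l, set 'rV[R]_(1 + u i)) :
  (forall i, (0 < u i)%N) ->
  (forall i, unimodular (B i)) ->
  let q := (\sum_(i < l) up_log 2 (u i).+1)%N in
  [set lsubmx y | y in SCk q (@polyPB R n m l hl A b u B) (@IB n l u)]
    = conv (polyPI hl A b u).
Proof.
move=> upos hB q.
apply/seteqP; split.
- exact: (dir_sub R n m l hl A b u B hB q (leqnn _)).
- exact: (sup_dir R n m l hl A b u B hB q).
Qed.
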